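(* Let $q\ge 7$ and $s\in[1,7]$ be integers, $C$ a finite set with $|C|=2q+s$, and $M\in\mathcal M(6,q,C)$. If $\{i,j,k,l,m,n\}=\{1,\dots,6\}$ and $r(i,j,k)\ge 1$, then $r(l,m,n)\le 9$.
   Context: $\mathcal M(6,q,C)$ is the set of $6\times q$ matrices $M$ with entries from $C$ such that each row has $q$ pairwise distinct entries, each column has $6$ pairwise distinct entries, and every pair of distinct colours of $C$ appears together in some row or some column of $M$. The frequency of a colour is the number of entries of $M$ equal to it. For three distinct rows $a,b,c$, $r(a,b,c)$ is the number of colours of frequency exactly $3$ appearing in each of the rows $a,b,c$. *)

(* Defs.v *)
From mathcomp Require Import all_boot.
Set Implicit Arguments. Unset Strict Implicit. Unset Printing Implicit Defensive.

(* A 6 x q matrix with entries in C, given as M i j (row i, column j). *)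
Definition in_row (C : finType) (q : nat) (M : 'I_6 -> 'I_q -> C) (i : 'I_6) (x : C) : bool :=
  [exists j : 'I_q, M i j == x].
Definition in_col (C : finType) (q : nat) (M : 'I_6 -> 'I_q -> C) (j : 'I_q) (x : C) : bool :=
  [exists i : 'I_6, M i j == x].

Definition in_Mclass (C : finType) (q : nat) (M : 'I_6 -> 'I_q -> C) : Prop :=
  (forall i : 'I_6, injective (M i)) /\
  (forall j : 'I_q, injective (fun i : 'I_6 => M i j)) /\
  (forall x y : C, x != y ->
     (exists i : 'I_6, in_row M i x && in_row M i y) \/
     (exists j : 'I_q, in_col M j x && in_col M j y)).

Definition freq (C : finType) (q : nat) (M : 'I_6 -> 'I_q -> C) (x : C) : nat :=
  #|[set p : 'I_6 * 'I_q | M p.1 p.2 == x]|.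

Definition rcount (C : finType) (q : nat) (M : 'I_6 -> 'I_q -> C) (a b c : 'I_6) : nat :=
  #|[set x : C | (freq M x == 3) && [&& in_row M a x, in_row M b x & in_row M c x]]|.

(* Main.v *)
Require Import Defs.
From mathcomp Require Import all_boot.

Lemma rows3 (C : finType) (q : nat) (M : 'I_6 -> 'I_q -> C) (a b c : 'I_6) x :
  uniq [:: a; b; c] -> freq M x = 3 -> in_row M a x -> in_row M b x ->
  in_row M c x -> forall p j, M p j = x -> p \in [:: a; b; c].
Proof.
move=> U F /existsP[ja /eqP Ha] /existsP[jb /eqP Hb] /existsP[jc /eqP Hc] p j Hp.
apply/negPn/negP => Np.
have U4 : uniq [:: (a,ja); (b,jb); (c,jc); (p,j)].
  apply: (@map_uniq _ _ fst) => /=.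
  move: U Np; rewrite /= !inE !negb_or ![p == _]eq_sym.
  by case/andP => /andP[-> ->] /andP[-> _] /and3P[-> -> ->].
have Hs : [pred u in [:: (a,ja); (b,jb); (c,jc); (p,j)]] \subset
   [set u : 'I_6 * 'I_q | M u.1 u.2 == x].
  by apply/subsetP => u; rewrite !inE => /or4P [] /eqP -> /=; apply/eqP.
have := subset_leq_card Hs.
rewrite (card_uniqP U4) /=.
by move: F; rewrite /freq => ->.
Qed.

Theorem claim4 (q s : nat) (C : finType) (M : 'I_6 -> 'I_q -> C)
  (i j k l m n : 'I_6) :
  7 <= q -> 1 <= s <= 7 -> #|C| = 2 * q + s -> in_Mclass M ->
  uniq [:: i; j; k; l; m; n] ->
  1 <= rcount M i j k -> rcount M l m n <= 9.
Proof.
move=> _ _ _ [Hr [_ Hp]].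
rewrite -[[:: i; j; k; l; m; n]]/([:: i; j; k] ++ [:: l; m; n]) cat_uniq.
case/and3P=> U1 /hasPn D U2.
rewrite /rcount card_gt0 => /set0Pn [x]; rewrite inE.
case/andP=> /eqP Fx /and3P[xi xj xk].
case/existsP: (xi) => ci /eqP Hci.
case/existsP: (xj) => cj /eqP Hcj.
case/existsP: (xk) => ck /eqP Hck.
have Xrows := @rows3 _ _ M i j k x U1 Fx xi xj xk.
pose g (p : 'I_3 * 'I_3) := M (nth l [:: l; m; n] p.1) (nth ci [:: ci; cj; ck] p.2).
apply: leq_trans (_ : #|g @: setT| <= 9); last first.
  by rewrite (leq_trans (leq_imset_card _ _)) // cardsT card_prod !card_ord.
apply: subset_leq_card; apply/subsetP => y; rewrite inE.
case/andP=> /eqP Fy /and3P[yl ym yn].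
have Yrows := @rows3 _ _ M l m n y U2 Fy yl ym yn.
have nxy : x != y.
  apply/eqP => exy; case/existsP: yl => c /eqP; rewrite -exy => /Xrows H.
  by have := D l; rewrite inE eqxx H => /(_ isT).
case: (Hp x y nxy) => [[r /andP[/existsP[c1 /eqP e1] /existsP[c2 /eqP e2]]]
  | [c /andP[/existsP[r1 /eqP e1] /existsP[r2 /eqP e2]]]].
  by have := D r (Yrows _ _ e2); rewrite (Xrows _ _ e1).
have r2in := Yrows _ _ e2.
have cin : c \in [:: ci; cj; ck].
  have := Xrows _ _ e1; rewrite !inE => /or3P[] /eqP er; subst r1.
  - by apply/or3P; constructor 1; apply/eqP; apply: (Hr i); rewrite e1 Hci.
  - by apply/or3P; constructor 2; apply/eqP; apply: (Hr j); rewrite e1 Hcj.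
  - by apply/or3P; constructor 3; apply/eqP; apply: (Hr k); rewrite e1 Hck.
apply/imsetP; exists (inord (index r2 [:: l; m; n]), inord (index c [:: ci; cj; ck])) => //.
rewrite /g !inordK ?nth_index //.
- by have := index_mem c [:: ci; cj; ck]; rewrite cin.
- by have := index_mem r2 [:: l; m; n]; rewrite r2in.
Qed.
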